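(* For all $Y,Z\in\mathbb{N}^\mathbb{N}$, the following are equivalent: (1) $Y=\mathcal{J}(Z)$; (2) for every $n$ there exists a finite string $\sigma_n\subset Z$ with $|\sigma_n|>n$ such that $Y\restriction n=J(\sigma_n)$.
   Context: Finite strings of natural numbers are coded by natural numbers via a fixed computable coding in which $\sigma\subsetneq\tau$ implies that the code of $\sigma$ is less than that of $\tau$; thus strings may be entries of other strings. For $\sigma$ a finite or infinite sequence, $\{e\}^\sigma_t(n)\downarrow$ means the $e$-th Turing machine on input $n$ with oracle $\sigma$ halts in fewer than $\min(|\sigma|,t)$ steps ($|\sigma|=\infty$ for infinite $\sigma$). For $Z\in\mathbb{N}^\mathbb{N}$, set $t_{-1}=1$ and $t_n=\max\{t_{n-1}+1,\ \mu t(\{n\}^Z_t(n)\downarrow)\}$, where $t_n=t_{n-1}+1$ if no such $t$ exists; then $\mathcal{J}(Z)\in\mathbb{N}^\mathbb{N}$ is defined by $\mathcal{J}(Z)(n)=Z\restriction t_n$. For a finite string $\sigma$, set $t_{-1}=1$ and $t_n=\max\{t_{n-1}+1,\ \mu t(\{n\}^{\sigma\restriction t}(n)\downarrow)\}$ (with $t_n=t_{n-1}+1$ if no such $t$), where $\{n\}^{\tau}(n)\downarrow$ means halting in fewer than $|\tau|$ steps and $\sigma\restriction t$ is the initial segment of length $\min(t,|\sigma|)$; then $J(\sigma)=\langle\sigma\restriction t_0,\dots,\sigma\restriction t_{k-1}\rangle$ where $k$ is least with $t_k>|\sigma|$. $Y\restriction n$ denotes the initial segment of $Y$ of length $n$.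 *)

(* Defs.v *)
From Stdlib Require Import ClassicalEpsilon.
From mathcomp Require Import all_boot.

Set Implicit Arguments.
Unset Strict Implicit.
Unset Printing Implicit Defensive.

(* Coding of finite strings of naturals by naturals: the standard      *)
(* MathComp bijection CodeSeq.code : seq nat -> nat, which is injective *)
(* and satisfies: sigma a proper initial segment of tau implies         *)
(* code sigma < code tau.                                               *)
Definition code (s : seq nat) : nat := CodeSeq.code s.

(* Step-bounded oracle Turing machines.                                *)
(* [halts e f x s] : the e-th machine on input x with (total) oracle f *)
(* halts in fewer than s steps.  The two properties of the fixed       *)
(* Turing machine model that the definitions rely on are recorded:     *)
(*  - monotonicity in the step bound;                                  *)
(*  - use principle: a computation halting in fewer than s steps only  *)
(*    reads the oracle below s.                                        *)
Record oracle_machines := OracleMachines {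
  halts : nat -> (nat -> nat) -> nat -> nat -> bool;
  halts_mono : forall e f x s s', s <= s' -> halts e f x s -> halts e f x s';
  halts_use : forall e f g x s, (forall i, i < s -> f i = g i) ->
                halts e f x s = halts e g x s
}.

(* Finite string used as an oracle: {e}^tau(x)↓ means halting in fewer *)
(* than |tau| steps (entries beyond |tau| are irrelevant by the use     *)
(* principle; we pad with 0).                                           *)
Definition haltsS (M : oracle_machines) (e : nat) (tau : seq nat) (x : nat) : bool :=
  halts M e (fun i => nth 0 tau i) x (size tau).

(* mu t. P t : least t with P t, and 0 if there is none. *)
Definition mu (P : pred nat) : nat :=
  match excluded_middle_informative (exists t, P t) with
  | left h => ex_minn h
  | right _ => 0
  end.

Definition restr (Z : nat -> nat) (n : nat) : seq nat := mkseq Z n.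

Definition init_seg (sigma : seq nat) (Z : nat -> nat) : Prop :=
  sigma = restr Z (size sigma).

(* tZ M Z i = t_{i-1} for the infinite sequence Z (so tZ M Z 0 = t_{-1} = 1). *)
Fixpoint tZ (M : oracle_machines) (Z : nat -> nat) (i : nat) : nat :=
  match i with
  | 0 => 1
  | n.+1 => maxn (tZ M Z n).+1 (mu (fun t => halts M n Z n t))
  end.

(* The jump operator  J(Z)(n) = Z | t_n. *)
Definition calJ (M : oracle_machines) (Z : nat -> nat) : nat -> nat :=
  fun n => code (restr Z (tZ M Z n.+1)).

(* tS M sigma i = t_{i-1} for the finite string sigma. *)
Fixpoint tS (M : oracle_machines) (sigma : seq nat) (i : nat) : nat :=
  match i with
  | 0 => 1
  | n.+1 => maxn (tS M sigma n).+1 (mu (fun t => haltsS M n (take t sigma) n))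
  end.

(* J(sigma) = < sigma|t_0, ..., sigma|t_{k-1} >, k least with t_k > |sigma|. *)
Definition Jfin (M : oracle_machines) (sigma : seq nat) : seq nat :=
  let k := mu (fun k => size sigma < tS M sigma k.+1) in
  [seq code (take (tS M sigma i.+1) sigma) | i <- iota 0 k].

(* Main.v *)
Require Import Defs.
From mathcomp Require Import all_boot.
From Stdlib Require Import FunctionalExtensionality ClassicalEpsilon.

Lemma muP (P : pred nat) : (exists t, P t) -> P (mu P) /\ forall t, P t -> mu P <= t.
Proof.
move=> ex; rewrite /mu; case: excluded_middle_informative => [h|//].
by case: ex_minnP => m Pm Hm; split.
Qed.

Lemma mu0 (P : pred nat) : ~ (exists t, P t) -> mu P = 0.
Proof. by move=> nex; rewrite /mu; case: excluded_middle_informative. Qed.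

Lemma tZ_lt M Z n : tZ M Z n < tZ M Z n.+1.
Proof. by rewrite /= leq_max leqnn. Qed.

Lemma tS_lt M s n : tS M s n < tS M s n.+1.
Proof. by rewrite /= leq_max leqnn. Qed.

Lemma tZ_ge M Z n : n < tZ M Z n.
Proof. elim: n => [//|n IH]; exact: leq_ltn_trans IH (tZ_lt M Z n). Qed.

Lemma tZ_mono M Z i j : i <= j -> tZ M Z i <= tZ M Z j.
Proof.
move/subnK => <-; elim: (j - i) => [//|d IH].
by rewrite addSn; apply: leq_trans IH (ltnW (tZ_lt _ _ _)).
Qed.

Lemma take_mkseq (Z : nat -> nat) m L : m <= L -> take m (mkseq Z L) = mkseq Z m.
Proof.
move=> hm; apply: (@eq_from_nth _ 0).
  by rewrite size_takel ?size_mkseq.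
move=> i; rewrite size_takel ?size_mkseq // => hi.
by rewrite nth_take // !nth_mkseq // (leq_trans hi hm).
Qed.

Lemma haltsS_take M n (s : seq nat) Z t : init_seg s Z ->
  haltsS M n (take t s) n = halts M n Z n (minn t (size s)).
Proof.
move=> hs; rewrite /haltsS size_take_min; apply: halts_use => i hi.
rewrite nth_take; last by move: hi; rewrite leq_min => /andP[].
rewrite {1}hs /restr nth_mkseq //; move: hi; rewrite leq_min => /andP[_].
done.
Qed.

Lemma mu_eq M n (s : seq nat) Z : init_seg s Z ->
  mu (fun t => halts M n Z n t) <= size s ->
  mu (fun t => haltsS M n (take t s) n) = mu (fun t => halts M n Z n t).
Proof.
move=> hs hle.
have E := fun t => @haltsS_take M n s Z t hs.
case: (excluded_middle_informative (exists t, halts M n Z n t)) => [ex|nex].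
  have [Pm Hm] := @muP _ ex.
  have exs : exists t, haltsS M n (take t s) n.
    by exists (mu (fun t => halts M n Z n t)); rewrite E (minn_idPl hle).
  have [Ps Hs] := @muP _ exs.
  apply/eqP; rewrite eqn_leq; apply/andP; split.
    by apply: Hs; rewrite E (minn_idPl hle).
  apply: leq_trans (geq_minl _ (size s)); apply: Hm; by rewrite -E.
rewrite (@mu0 _ nex) mu0 // => -[t]; rewrite E => h; apply: nex; by exists (minn t (size s)).
Qed.

Lemma tS_tZ M (s : seq nat) Z j : init_seg s Z -> tZ M Z j <= size s -> tS M s j = tZ M Z j.
Proof.
move=> hs; elim: j => [//|j IH] hj /=.
have hj' : tZ M Z j <= size s by apply: leq_trans (ltnW (tZ_lt _ _ _)) hj.
rewrite IH // (@mu_eq M j s Z hs).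
  by []. exact: leq_trans (leq_maxr (tZ M Z j).+1 _) hj.
Qed.

Lemma size_Jfin M s : size (Jfin M s) = mu (fun k => size s < tS M s k.+1).
Proof. by rewrite /Jfin size_map size_iota. Qed.

Theorem lemma4p5 (M : oracle_machines) (Y Z : nat -> nat) :
  Y = calJ M Z <->
  (forall n : nat, exists sigma : seq nat,
      init_seg sigma Z /\ n < size sigma /\ restr Y n = Jfin M sigma).
Proof.
split.
  move=> -> n; exists (restr Z (tZ M Z n)).
  have hs : init_seg (restr Z (tZ M Z n)) Z by rewrite /init_seg /restr size_mkseq.
  have sz : size (restr Z (tZ M Z n)) = tZ M Z n by rewrite /restr size_mkseq.
  split=> //; split; first by rewrite sz tZ_ge.
  have hk : mu (fun k => size (restr Z (tZ M Z n)) < tS M (restr Z (tZ M Z n)) k.+1) = n.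
    have ex : exists k, size (restr Z (tZ M Z n)) < tS M (restr Z (tZ M Z n)) k.+1.
      exists n; rewrite sz -{1}(@tS_tZ M _ _ n hs) ?sz //; exact: tS_lt.
    have [Pm Hm] := @muP _ ex.
    apply/eqP; rewrite eqn_leq; apply/andP; split.
      apply: Hm; rewrite sz -{1}(@tS_tZ M _ _ n hs) ?sz //; exact: tS_lt.
    move: Pm; set k := mu _ => Pm; rewrite leqNgt; apply/negP => hlt; move: Pm.
    have hm := @tZ_mono M Z _ _ hlt.
    rewrite sz (@tS_tZ M _ _ k.+1 hs) ?sz //.
    by rewrite ltnNge hm.
  rewrite /Jfin hk /restr /mkseq; apply/eq_in_map => i; rewrite mem_iota add0n => /andP[_ hi].
  have hle : tZ M Z i.+1 <= tZ M Z n by rewrite tZ_mono.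
  by rewrite /calJ (@tS_tZ M _ _ _ hs) ?sz // take_mkseq.
move=> H; apply: functional_extensionality => n.
have [s [hs [hN hJ]]] := H (maxn n.+1 (tZ M Z n.+1)).
have hsz := congr1 size hJ; rewrite size_Jfin /restr size_mkseq in hsz.
have hle : tZ M Z n.+1 <= size s.
  apply: ltnW; apply: leq_ltn_trans hN; exact: leq_maxr.
have hn : n < maxn n.+1 (tZ M Z n.+1) by rewrite leq_max leqnn.
have := congr1 (nth 0 ^~ n) hJ.
rewrite /restr nth_mkseq // => ->.
rewrite /Jfin (nth_map 0); last by rewrite size_iota -hsz.
rewrite nth_iota; last by rewrite -hsz.
by rewrite add0n (@tS_tZ M _ _ _ hs hle) {1}hs take_mkseq.
Qed.
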